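(* Let $X,Y$ be Scott domains quantified, respectively, by partial metrics $p_X,p_Y$. Then the cartesian product $X\times Y$ (with the componentwise order) is quantified by the partial metric $p_{X\times Y}:=\frac12(p_X+p_Y)$, i.e. $p_{X\times Y}(\langle x,y\rangle,\langle x',y'\rangle)=\frac12\big(p_X(x,x')+p_Y(y,y')\big)$.
   Context: A partial metric (PM) on $X$ is $p:X\times X\to[0,+\infty]$ with $p(x,x)\leq p(x,y)$; $p(x,x)=p(x,y)=p(y,y)\Rightarrow x=y$; $p(x,y)=p(y,x)$; $p(x,y)\leq p(x,z)+p(z,y)-p(z,z)$. Open balls $B^p_\epsilon(x)=\{y\mid p(y,x)<p(x,x)+\epsilon\}$, and $\mathcal O_p(X)$ is the topology of unions of open balls. In a dcpo, $x\ll y$ iff every directed $\Delta$ with $y\leq\bigvee\Delta$ contains some $d\geq x$; a basis is a $B\subseteq X$ with $\{b\in B\mid b\ll x\}$ directed with join $x$ for every $x$; an element $x$ is compact if $x\ll x$. A domain is a dcpo with a countable basis; it is bounded complete if every finite subset having an upper bound has a join; it is algebraic if it has a basis of compact elements. A Scott domain is a bounded complete algebraic domain. The Scott topology $\mathcal O_\sigma(X)$ consists of upper sets $U$ with $x\in U\Rightarrow\exists y\ll x,\ y\in U$. A dcpo $X$ is quantified by $p$ if $\mathcal O_\sigma(X)=\mathcal O_p(X)$. *)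

(* Defs.v *)
From Stdlib Require Import Reals List.
From Coquelicot Require Import Rbar.
Open Scope R_scope.

Section Defs.
Context {X : Type} (le : X -> X -> Prop).

Definition is_poset : Prop :=
  (forall x, le x x) /\
  (forall x y, le x y -> le y x -> x = y) /\
  (forall x y z, le x y -> le y z -> le x z).

Definition directed (D : X -> Prop) : Prop :=
  (exists d, D d) /\
  (forall a b, D a -> D b -> exists c, D c /\ le a c /\ le b c).

Definition is_lub (D : X -> Prop) (s : X) : Prop :=
  (forall d, D d -> le d s) /\ (forall u, (forall d, D d -> le d u) -> le s u).

Definition is_dcpo : Prop :=
  is_poset /\ forall D, directed D -> exists s, is_lub D s.

Definition way_below (x y : X) : Prop :=
  forall D s, directed D -> is_lub D s -> le y s -> exists d, D d /\ le x d.

Definition compact (x : X) : Prop := way_below x x.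

Definition is_basis (B : X -> Prop) : Prop :=
  forall x, directed (fun b => B b /\ way_below b x) /\
            is_lub (fun b => B b /\ way_below b x) x.

Definition countable_set (B : X -> Prop) : Prop :=
  exists g : X -> nat, forall a b, B a -> B b -> g a = g b -> a = b.

Definition is_domain : Prop :=
  is_dcpo /\ exists B, is_basis B /\ countable_set B.

Definition bounded_complete : Prop :=
  forall l : list X, (exists u, forall a, In a l -> le a u) ->
    exists s, is_lub (fun a => In a l) s.

Definition algebraic : Prop :=
  is_domain /\ exists B, is_basis B /\ forall b, B b -> compact b.

Definition scott_domain : Prop :=
  is_domain /\ bounded_complete /\ algebraic.

Definition scott_open (U : X -> Prop) : Prop :=
  (forall x y, U x -> le x y -> U y) /\
  (forall x, U x -> exists y, way_below y x /\ U y).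

End Defs.

Section PM.
Context {X : Type} (p : X -> X -> Rbar).

(* partial metric with values in [0,+oo]; the triangle inequality is written
   without subtraction: p(x,y) + p(z,z) <= p(x,z) + p(z,y). *)
Definition partial_metric : Prop :=
  (forall x y, Rbar_le (Finite 0) (p x y)) /\
  (forall x y, Rbar_le (p x x) (p x y)) /\
  (forall x y, p x x = p x y -> p x y = p y y -> x = y) /\
  (forall x y, p x y = p y x) /\
  (forall x y z, Rbar_le (Rbar_plus (p x y) (p z z)) (Rbar_plus (p x z) (p z y))).

Definition open_ball (x : X) (eps : R) (y : X) : Prop :=
  Rbar_lt (p y x) (Rbar_plus (p x x) (Finite eps)).

Definition p_open (U : X -> Prop) : Prop :=
  exists F : X -> R -> Prop,
    (forall c e, F c e -> 0 < e) /\
    (forall y, U y <-> exists c e, F c e /\ open_ball c e y).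

End PM.

Definition quantified {X : Type} (le : X -> X -> Prop) (p : X -> X -> Rbar) : Prop :=
  is_dcpo le /\ partial_metric p /\ (forall U, scott_open le U <-> p_open p U).

Definition prod_le {X Y : Type} (leX : X -> X -> Prop) (leY : Y -> Y -> Prop)
  (a b : X * Y) : Prop := leX (fst a) (fst b) /\ leY (snd a) (snd b).

Definition prod_pm {X Y : Type} (pX : X -> X -> Rbar) (pY : Y -> Y -> Rbar)
  (a b : X * Y) : Rbar :=
  Rbar_mult (Finite (/ 2)) (Rbar_plus (pX (fst a) (fst b)) (pY (snd a) (snd b))).

(* Main.v *)
Require Import Defs.
From Stdlib Require Import Reals List Lra.
From Coquelicot Require Import Rbar.

Open Scope R_scope.

Definition hs (a b : Rbar) : Rbar :=
  match a, b with Finite r, Finite s => Finite ((r + s) / 2) | _, _ => p_infty end.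

Lemma nonneg_cases a : Rbar_le (Finite 0) a -> (exists r, a = Finite r) \/ a = p_infty.
Proof. destruct a; simpl; intros; eauto; contradiction. Qed.

Lemma mult_half_pinf : Rbar_mult (Finite (/2)) p_infty = p_infty.
Proof.
  unfold Rbar_mult, Rbar_mult'.
  destruct (Rle_dec 0 (/2)) as [H|H]; [|lra].
  destruct (Rle_lt_or_eq_dec 0 (/2) H); [reflexivity| lra].
Qed.

Lemma half_eq a b : Rbar_le (Finite 0) a -> Rbar_le (Finite 0) b ->
  Rbar_mult (Finite (/2)) (Rbar_plus a b) = hs a b.
Proof.
  intros Ha Hb.
  destruct (nonneg_cases a Ha) as [[r ->]| ->];
  destruct (nonneg_cases b Hb) as [[s ->]| ->]; simpl;
  try apply mult_half_pinf.
  f_equal; lra.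
Qed.

Section Gen.
Context {X : Type} (p : X -> X -> Rbar).
Hypothesis nonneg : forall x y, Rbar_le (Finite 0) (p x y).
Hypothesis refl_le : forall x y, Rbar_le (p x x) (p x y).
Hypothesis sym : forall x y, p x y = p y x.
Hypothesis tri : forall x y z, Rbar_le (Rbar_plus (p x y) (p z z)) (Rbar_plus (p x z) (p z y)).

Lemma inf_self u x : p u u = p_infty -> p x u = p_infty.
Proof.
  intros H. pose proof (refl_le u x) as H1. rewrite H, sym in H1.
  destruct (p x u); simpl in H1; try contradiction; reflexivity.
Qed.

Lemma tri_fin w x u q t s : p w x = Finite q -> p x x = Finite t -> p x u = Finite s ->
  exists r, p w u = Finite r /\ r <= q + s - t.
Proof.
  intros Hq Ht Hs. pose proof (tri w u x) as H.
  rewrite Hq, Ht, Hs in H.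
  destruct (nonneg_cases _ (nonneg w u)) as [[r Hr]|Hr]; rewrite Hr in H; simpl in H.
  - exists r; split; auto; lra.
  - contradiction.
Qed.

Lemma ball_center u e x : open_ball p u e x ->
  exists d, 0 < d /\ (exists t, p x x = Finite t) /\
    forall w, open_ball p x d w -> open_ball p u e w.
Proof.
  unfold open_ball. intros H.
  destruct (nonneg_cases _ (nonneg u u)) as [[r Hr]|Hr].
  - destruct (nonneg_cases _ (nonneg x u)) as [[s Hs]|Hs]; rewrite Hr, Hs in H; simpl in H;
      [|contradiction].
    pose proof (refl_le x u) as Hl.
    destruct (nonneg_cases _ (nonneg x x)) as [[t Ht]|Ht]; rewrite Ht, Hs in Hl; simpl in Hl;
      [|contradiction].
    exists (r + e - s). split; [lra|]. split; [eauto|].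
    intros w Hw. rewrite Ht in Hw.
    destruct (nonneg_cases _ (nonneg w x)) as [[q Hq]|Hq]; rewrite Hq in Hw; simpl in Hw;
      [|contradiction].
    destruct (tri_fin w x u q t s Hq Ht Hs) as [r' [Hr' Hle]].
    rewrite Hr', Hr. simpl. lra.
  - rewrite (inf_self u x Hr), Hr in H. simpl in H. contradiction.
Qed.

End Gen.

Lemma way_below_le {X : Type} (le : X -> X -> Prop) a x :
  (forall z, le z z) -> way_below le a x -> le a x.
Proof.
  intros Hr H.
  destruct (H (fun z => z = x) x) as [d [-> Hd]]; auto.
  - split; [exists x; auto|]. intros a0 b0 -> ->. exists x; auto.
  - split; [intros d ->; auto| intros u Hu; apply Hu; auto].
Qed.

Lemma way_below_mono {X : Type} (le : X -> X -> Prop) a x z :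
  (forall x y z, le x y -> le y z -> le x z) -> way_below le a x -> le x z -> way_below le a z.
Proof.
  intros Ht H Hxz D s HD Hs Hz. apply (H D s HD Hs). eauto.
Qed.


Lemma hs_tri a1 a2 a3 a4 b1 b2 b3 b4 :
  Rbar_le (Finite 0) a1 -> Rbar_le (Finite 0) a2 -> Rbar_le (Finite 0) a3 -> Rbar_le (Finite 0) a4 ->
  Rbar_le (Finite 0) b1 -> Rbar_le (Finite 0) b2 -> Rbar_le (Finite 0) b3 -> Rbar_le (Finite 0) b4 ->
  Rbar_le (Rbar_plus a1 a2) (Rbar_plus a3 a4) -> Rbar_le (Rbar_plus b1 b2) (Rbar_plus b3 b4) ->
  Rbar_le (Rbar_plus (hs a1 b1) (hs a2 b2)) (Rbar_plus (hs a3 b3) (hs a4 b4)).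
Proof.
  intros H1 H2 H3 H4 H5 H6 H7 H8.
  destruct (nonneg_cases a3 H3) as [[r3 ->]| ->];
  destruct (nonneg_cases a4 H4) as [[r4 ->]| ->];
  destruct (nonneg_cases b3 H7) as [[s3 ->]| ->];
  destruct (nonneg_cases b4 H8) as [[s4 ->]| ->];
  destruct (nonneg_cases a1 H1) as [[r1 ->]| ->];
  destruct (nonneg_cases a2 H2) as [[r2 ->]| ->];
  destruct (nonneg_cases b1 H5) as [[s1 ->]| ->];
  destruct (nonneg_cases b2 H6) as [[s2 ->]| ->]; simpl in *; try tauto; lra.
Qed.

Section Prod.
Context {X Y : Type} (leX : X -> X -> Prop) (leY : Y -> Y -> Prop).
Hypothesis dX : is_dcpo leX.
Hypothesis dY : is_dcpo leY.

Lemma prod_dcpo : is_dcpo (prod_le leX leY).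
Proof.
  destruct dX as [[rX [aX tX]] lX]. destruct dY as [[rY [aY tY]] lY].
  split; [split; [|split]|].
  - intros [x y]; split; simpl; auto.
  - intros [x y] [x' y'] [H1 H2] [H3 H4]; simpl in *. f_equal; auto.
  - intros [x y] [x' y'] [x'' y''] [H1 H2] [H3 H4]; split; simpl in *; eauto.
  - intros D [[d0 Hd0] HD].
    destruct (lX (fun a => exists d, D d /\ fst d = a)) as [s1 [Hs1 Hs1']].
    { split; [exists (fst d0); eauto|].
      intros a b [d1 [Hd1 <-]] [d2 [Hd2 <-]].
      destruct (HD d1 d2 Hd1 Hd2) as [c [Hc [[Hc1 _] [Hc2 _]]]]. exists (fst c); eauto. }
    destruct (lY (fun a => exists d, D d /\ snd d = a)) as [s2 [Hs2 Hs2']].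
    { split; [exists (snd d0); eauto|].
      intros a b [d1 [Hd1 <-]] [d2 [Hd2 <-]].
      destruct (HD d1 d2 Hd1 Hd2) as [c [Hc [[_ Hc1] [_ Hc2]]]]. exists (snd c); eauto. }
    exists (s1, s2). split.
    + intros d Hd. split; simpl; [apply Hs1|apply Hs2]; eauto.
    + intros u Hu. split; simpl; [apply Hs1'|apply Hs2'];
      intros a [d [Hd <-]]; apply Hu; auto.
Qed.

Lemma wb_prod_intro a b x y : way_below leX a x -> way_below leY b y ->
  way_below (prod_le leX leY) (a, b) (x, y).
Proof.
  destruct dX as [[rX [aX tX]] lX]. destruct dY as [[rY [aY tY]] lY].
  intros Ha Hb D s [[d0 Hd0] HD] [Hs Hs'] [Hxs Hys]; simpl in *.
  assert (D1 : directed leX (fun a => exists d, D d /\ fst d = a)).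
  { split; [exists (fst d0); eauto|].
    intros a0 b0 [d1 [Hd1 <-]] [d2 [Hd2 <-]].
    destruct (HD d1 d2 Hd1 Hd2) as [c [Hc [[Hc1 _] [Hc2 _]]]]. exists (fst c); eauto. }
  assert (D2 : directed leY (fun a => exists d, D d /\ snd d = a)).
  { split; [exists (snd d0); eauto|].
    intros a0 b0 [d1 [Hd1 <-]] [d2 [Hd2 <-]].
    destruct (HD d1 d2 Hd1 Hd2) as [c [Hc [[_ Hc1] [_ Hc2]]]]. exists (snd c); eauto. }
  destruct (lX _ D1) as [s1 [Hs1 Hs1']].
  destruct (lY _ D2) as [s2 [Hs2 Hs2']].
  assert (Hss : prod_le leX leY s (s1, s2)).
  { apply Hs'. intros d Hd. split; simpl; [apply Hs1|apply Hs2]; eauto. }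
  destruct Hss as [Hss1 Hss2]; simpl in *.
  destruct (Ha _ s1 D1 (conj Hs1 Hs1') (tX _ _ _ Hxs Hss1)) as [a1 [[d1 [Hd1 <-]] Ha1]].
  destruct (Hb _ s2 D2 (conj Hs2 Hs2') (tY _ _ _ Hys Hss2)) as [b1 [[d2 [Hd2 <-]] Hb1]].
  destruct (HD d1 d2 Hd1 Hd2) as [c [Hc [[Hc1 _] [_ Hc2]]]].
  exists c. split; auto. split; simpl; eauto.
Qed.

Lemma wb_prod_fst a b x y : way_below (prod_le leX leY) (a, b) (x, y) -> way_below leX a x.
Proof.
  destruct dY as [[rY [aY tY]] lY].
  intros H D s [[d0 Hd0] HD] [Hs Hs'] Hxs.
  destruct (H (fun z => D (fst z) /\ snd z = y) (s, y)) as [[d e] [[Hd He] [Had _]]];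
    simpl in *; eauto.
  - split; [exists (d0, y); simpl; auto|].
    intros [a1 b1] [a2 b2] [H1 E1] [H2 E2]; simpl in *; subst.
    destruct (HD a1 a2 H1 H2) as [c [Hc [Hc1 Hc2]]]. exists (c, y).
    repeat split; simpl; auto.
  - split.
    + intros [d e] [Hd E]; simpl in *; subst; split; simpl; auto.
    + intros [u v] Hu. split; simpl.
      * apply Hs'. intros d Hd. exact (proj1 (Hu (d, y) (conj Hd eq_refl))).
      * exact (proj2 (Hu (d0, y) (conj Hd0 eq_refl))).
  - split; simpl; auto.
Qed.

Lemma wb_prod_snd a b x y : way_below (prod_le leX leY) (a, b) (x, y) -> way_below leY b y.
Proof.
  destruct dX as [[rX [aX tX]] lX].
  intros H D s [[d0 Hd0] HD] [Hs Hs'] Hxs.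
  destruct (H (fun z => D (snd z) /\ fst z = x) (x, s)) as [[e d] [[Hd He] [_ Had]]];
    simpl in *; eauto.
  - split; [exists (x, d0); simpl; auto|].
    intros [a1 b1] [a2 b2] [H1 E1] [H2 E2]; simpl in *; subst.
    destruct (HD b1 b2 H1 H2) as [c [Hc [Hc1 Hc2]]]. exists (x, c).
    repeat split; simpl; auto.
  - split.
    + intros [e d] [Hd E]; simpl in *; subst; split; simpl; auto.
    + intros [u v] Hu. split; simpl.
      * exact (proj1 (Hu (x, d0) (conj Hd0 eq_refl))).
      * apply Hs'. intros d Hd. exact (proj2 (Hu (x, d) (conj Hd eq_refl))).
  - split; simpl; auto.
Qed.

End Prod.


Section PMProd.
Context {X Y : Type} (pX : X -> X -> Rbar) (pY : Y -> Y -> Rbar).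
Hypothesis nnX : forall x y, Rbar_le (Finite 0) (pX x y).
Hypothesis rlX : forall x y, Rbar_le (pX x x) (pX x y).
Hypothesis symX : forall x y, pX x y = pX y x.
Hypothesis nnY : forall x y, Rbar_le (Finite 0) (pY x y).
Hypothesis rlY : forall x y, Rbar_le (pY x x) (pY x y).
Hypothesis symY : forall x y, pY x y = pY y x.

Lemma prod_ball_iff u v x y e :
  open_ball (prod_pm pX pY) (u, v) e (x, y) <->
  exists a1 a2 b1 b2, pX x u = Finite a1 /\ pX u u = Finite a2 /\
    pY y v = Finite b1 /\ pY v v = Finite b2 /\ (a1 + b1) / 2 < (a2 + b2) / 2 + e.
Proof.
  unfold open_ball, prod_pm; simpl. rewrite !half_eq by auto. split.
  - intros H.
    destruct (nonneg_cases _ (nnX u u)) as [[a2 Ha2]|Ha2];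
      [| rewrite (inf_self pX rlX symX u x Ha2) in H; simpl in H; contradiction].
    destruct (nonneg_cases _ (nnY v v)) as [[b2 Hb2]|Hb2];
      [| rewrite (inf_self pY rlY symY v y Hb2) in H; simpl in H;
         destruct (pX x u); simpl in H; contradiction].
    destruct (nonneg_cases _ (nnX x u)) as [[a1 Ha1]|Ha1];
      [| rewrite Ha1 in H; simpl in H; contradiction].
    destruct (nonneg_cases _ (nnY y v)) as [[b1 Hb1]|Hb1];
      [| rewrite Ha1, Hb1 in H; simpl in H; contradiction].
    rewrite Ha1, Ha2, Hb1, Hb2 in H. simpl in H.
    exists a1, a2, b1, b2. repeat split; auto.
  - intros [a1 [a2 [b1 [b2 [-> [-> [-> [-> H]]]]]]]]. simpl. lra.
Qed.

Hypothesis fX : forall x, exists t, pX x x = Finite t.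
Hypothesis fY : forall x, exists t, pY x x = Finite t.
Hypothesis sepX : forall x y, pX x x = pX x y -> pX x y = pX y y -> x = y.
Hypothesis sepY : forall x y, pY x x = pY x y -> pY x y = pY y y -> x = y.
Hypothesis triX : forall x y z, Rbar_le (Rbar_plus (pX x y) (pX z z)) (Rbar_plus (pX x z) (pX z y)).
Hypothesis triY : forall x y z, Rbar_le (Rbar_plus (pY x y) (pY z z)) (Rbar_plus (pY x z) (pY z y)).

Lemma prod_pm_ok : partial_metric (prod_pm pX pY).
Proof.
  unfold partial_metric, prod_pm.
  split; [|split; [|split; [|split]]].
  - intros a b. rewrite half_eq by auto.
    generalize (nnX (fst a) (fst b)) (nnY (snd a) (snd b)).
    destruct (pX (fst a) (fst b)), (pY (snd a) (snd b)); simpl; intros; try tauto; lra.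
  - intros a b. rewrite !half_eq by auto.
    generalize (rlX (fst a) (fst b)) (rlY (snd a) (snd b)) (fX (fst a)) (fY (snd a)).
    destruct (pX (fst a) (fst b)), (pY (snd a) (snd b)), (pX (fst a) (fst a)), (pY (snd a) (snd a));
      intros H1 H2 [t1 E1] [t2 E2]; try discriminate; simpl in *; try tauto; lra.
  - intros [a1 a2] [b1 b2]; simpl. rewrite !half_eq by auto. intros E1 E2.
    pose proof (rlX a1 b1) as L1. pose proof (rlX b1 a1) as L2. rewrite (symX b1 a1) in L2.
    pose proof (rlY a2 b2) as L3. pose proof (rlY b2 a2) as L4. rewrite (symY b2 a2) in L4.
    destruct (fX a1) as [t1 T1], (fX b1) as [t3 T3], (fY a2) as [u1 U1], (fY b2) as [u3 U3].
    rewrite T1, T3 in *. rewrite U1, U3 in *.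
    destruct (pX a1 b1) as [x| |] eqn:EX; [|simpl in E1; discriminate|simpl in E1; discriminate].
    destruct (pY a2 b2) as [y| |] eqn:EY; [|simpl in E1; discriminate|simpl in E1; discriminate].
    simpl in *. injection E1 as E1. injection E2 as E2.
    assert (t1 = x) by lra. assert (x = t3) by lra. assert (u1 = y) by lra. assert (y = u3) by lra.
    f_equal; [apply sepX|apply sepY]; congruence.
  - intros a b. rewrite symX, symY. reflexivity.
  - intros a b c. rewrite !half_eq by auto. apply hs_tri; auto.
Qed.

End PMProd.

Theorem mainTheorem6 (X Y : Type) (leX : X -> X -> Prop) (leY : Y -> Y -> Prop)
  (pX : X -> X -> Rbar) (pY : Y -> Y -> Rbar) :
  scott_domain leX -> scott_domain leY ->
  quantified leX pX -> quantified leY pY ->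
  quantified (prod_le leX leY) (prod_pm pX pY).
Proof.
  intros [_ [_ [_ [BX [basX compX]]]]] [_ [_ [_ [BY [basY compY]]]]]
    [dcX [pmX eqX]] [dcY [pmY eqY]].
  pose proof pmX as [nnX [rlX [sepX [symX triX]]]].
  pose proof pmY as [nnY [rlY [sepY [symY triY]]]].
  pose proof dcX as [[rX [aX tX]] lX]. pose proof dcY as [[rY [aY tY]] lY].
  assert (fX : forall x, exists t, pX x x = Finite t).
  { intros x. destruct (proj1 (eqX (fun _ => True))) as [F [Fp HF]].
    - split; [auto|]. intros z _. destruct (basX z) as [[[d [_ Hd]] _] _]. eauto.
    - destruct (proj1 (HF x) I) as [c [e [Hc Hb]]].
      destruct (ball_center pX nnX rlX symX triX c e x Hb) as [_ [_ [H _]]]; auto. }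
  assert (fY : forall x, exists t, pY x x = Finite t).
  { intros x. destruct (proj1 (eqY (fun _ => True))) as [F [Fp HF]].
    - split; [auto|]. intros z _. destruct (basY z) as [[[d [_ Hd]] _] _]. eauto.
    - destruct (proj1 (HF x) I) as [c [e [Hc Hb]]].
      destruct (ball_center pY nnY rlY symY triY c e x Hb) as [_ [_ [H _]]]; auto. }
  assert (ballX : forall x d, 0 < d -> scott_open leX (open_ball pX x d)).
  { intros x d Hd. apply eqX. exists (fun c e => c = x /\ e = d). split.
    - intros c e [_ ->]; auto.
    - intros y; split; [intros H; exists x, d; auto | intros [c [e [[-> ->] H]]]; auto]. }
  assert (ballY : forall x d, 0 < d -> scott_open leY (open_ball pY x d)).
  { intros x d Hd. apply eqY. exists (fun c e => c = x /\ e = d). split.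
    - intros c e [_ ->]; auto.
    - intros y; split; [intros H; exists x, d; auto | intros [c [e [[-> ->] H]]]; auto]. }
  (* upsets of compact elements near a way-below element *)
  assert (upX : forall a x, way_below leX a x -> exists d, 0 < d /\ open_ball pX x d x /\
             forall w, open_ball pX x d w -> leX a w).
  { intros a x Ha. destruct (basX x) as [Hdir Hlub].
    destruct (Ha _ x Hdir Hlub (rX x)) as [c [[Bc Hcx] Hac]].
    assert (Hso : scott_open leX (fun z => leX c z)).
    { split; [eauto|]. intros z Hz. exists c. split; auto.
      apply (way_below_mono leX c c z tX (compX c Bc) Hz). }
    destruct (proj1 (eqX _) Hso) as [F [Fp HF]].
    destruct (proj1 (HF x) (way_below_le leX c x rX Hcx)) as [u [e [Hu Hb]]].
    destruct (ball_center pX nnX rlX symX triX u e x Hb) as [d [Hd [[t Ht] Hin]]].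
    exists d. split; auto. split.
    - unfold open_ball. rewrite Ht. simpl. lra.
    - intros w Hw. apply tX with c; auto. apply (proj2 (HF w)). exists u, e; auto. }
  assert (upY : forall a x, way_below leY a x -> exists d, 0 < d /\ open_ball pY x d x /\
             forall w, open_ball pY x d w -> leY a w).
  { intros a x Ha. destruct (basY x) as [Hdir Hlub].
    destruct (Ha _ x Hdir Hlub (rY x)) as [c [[Bc Hcx] Hac]].
    assert (Hso : scott_open leY (fun z => leY c z)).
    { split; [eauto|]. intros z Hz. exists c. split; auto.
      apply (way_below_mono leY c c z tY (compY c Bc) Hz). }
    destruct (proj1 (eqY _) Hso) as [F [Fp HF]].
    destruct (proj1 (HF x) (way_below_le leY c x rY Hcx)) as [u [e [Hu Hb]]].
    destruct (ball_center pY nnY rlY symY triY u e x Hb) as [d [Hd [[t Ht] Hin]]].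
    exists d. split; auto. split.
    - unfold open_ball. rewrite Ht. simpl. lra.
    - intros w Hw. apply tY with c; auto. apply (proj2 (HF w)). exists u, e; auto. }
  split; [apply prod_dcpo; auto|]. split; [apply prod_pm_ok; auto|].
  intros U. split.
  - intros [Uup Uwb].
    exists (fun c e => 0 < e /\ forall z, open_ball (prod_pm pX pY) c e z -> U z).
    split; [intros c e [H _]; exact H|].
    intros [x y]. split.
    + intros HU. destruct (Uwb _ HU) as [[a b] [Hab HUab]].
      destruct (upX a x (wb_prod_fst leX leY dcY a b x y Hab)) as [d1 [Hd1 [_ H1]]].
      destruct (upY b y (wb_prod_snd leX leY dcX a b x y Hab)) as [d2 [Hd2 [_ H2]]].
      destruct (fX x) as [t1 T1], (fY y) as [t2 T2].
      exists (x, y), (Rmin d1 d2 / 2).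
      assert (0 < Rmin d1 d2) by (apply Rmin_pos; auto).
      split; [split; [lra|]|].
      * intros [w1 w2] Hw.
        apply (prod_ball_iff pX pY nnX rlX symX nnY rlY symY) in Hw.
        destruct Hw as [a1 [a2 [b1 [b2 [E1 [E2 [E3 [E4 Hlt]]]]]]]].
        pose proof (rlX x w1) as L1. rewrite (symX x w1), E1, E2 in L1. simpl in L1.
        pose proof (rlY y w2) as L2. rewrite (symY y w2), E3, E4 in L2. simpl in L2.
        pose proof (Rmin_l d1 d2). pose proof (Rmin_r d1 d2).
        apply Uup with (a, b); auto. split; simpl.
        -- apply H1. unfold open_ball. rewrite E1, E2. simpl. lra.
        -- apply H2. unfold open_ball. rewrite E3, E4. simpl. lra.
      * apply (prod_ball_iff pX pY nnX rlX symX nnY rlY symY).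
        exists t1, t1, t2, t2. repeat split; auto. lra.
    + intros [c [e [[He Hc] Hb]]]. apply Hc, Hb.
  - intros [F [Fp HF]].
    assert (key : forall x y, U (x, y) -> exists d, 0 < d /\
       (forall w1 w2, open_ball pX x d w1 -> open_ball pY y d w2 -> U (w1, w2)) /\
       open_ball pX x d x /\ open_ball pY y d y).
    { intros x y HU. destruct (proj1 (HF (x, y)) HU) as [[u v] [e [Hc Hb]]].
      pose proof (Fp _ _ Hc) as He.
      apply (prod_ball_iff pX pY nnX rlX symX nnY rlY symY) in Hb.
      destruct Hb as [a1 [a2 [b1 [b2 [E1 [E2 [E3 [E4 Hlt]]]]]]]].
      destruct (fX x) as [t1 T1], (fY y) as [t2 T2].
      exists (((a2 + b2) + 2 * e - (a1 + b1)) / 2). split; [lra|]. split; [|split].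
      - intros w1 w2 Hw1 Hw2. unfold open_ball in Hw1, Hw2. rewrite T1 in Hw1. rewrite T2 in Hw2.
        destruct (nonneg_cases _ (nnX w1 x)) as [[q1 Q1]|Q1]; rewrite Q1 in Hw1; simpl in Hw1;
          [|contradiction].
        destruct (nonneg_cases _ (nnY w2 y)) as [[q2 Q2]|Q2]; rewrite Q2 in Hw2; simpl in Hw2;
          [|contradiction].
        destruct (tri_fin pX nnX triX w1 x u q1 t1 a1 Q1 T1 E1) as [r1 [R1 Hr1]].
        destruct (tri_fin pY nnY triY w2 y v q2 t2 b1 Q2 T2 E3) as [r2 [R2 Hr2]].
        apply (proj2 (HF (w1, w2))). exists (u, v), e. split; auto.
        apply (prod_ball_iff pX pY nnX rlX symX nnY rlY symY).
        exists r1, a2, r2, b2. repeat split; auto. lra.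
      - unfold open_ball. rewrite T1. simpl. lra.
      - unfold open_ball. rewrite T2. simpl. lra. }
    split.
    + intros [x y] [x2 y2] HU [Hx Hy]; simpl in *.
      destruct (key x y HU) as [d [Hd [Hin [Bx By]]]].
      apply Hin; [apply (proj1 (ballX x d Hd)) with x | apply (proj1 (ballY y d Hd)) with y]; auto.
    + intros [x y] HU.
      destruct (key x y HU) as [d [Hd [Hin [Bx By]]]].
      destruct (proj2 (ballX x d Hd) x Bx) as [a [Ha Ba]].
      destruct (proj2 (ballY y d Hd) y By) as [b [Hb Bb]].
      exists (a, b). split; [apply wb_prod_intro; auto|].
      apply Hin; auto.
Qed.
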